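(* Let $G$ be a group of order $q$ in which the discrete logarithm problem is hard, and let $g,h$ be randomly chosen generators of $G$. For rounds $k=1,\dots,l$, let participant $P_i$ hold $K_i^{(k)},r_i^{(k)}\in\mathbb{Z}_q$ and commitment $c_i^{(k)}=g^{K_i^{(k)}}h^{r_i^{(k)}}$, and let its ciphertext of round $k$ be $O_i^{(k)}\in\mathbb{Z}_q$, which encodes the message $O_i^{(k)}-K_i^{(k)}$ (encoding no message if this equals $0$). If a poly-time participant $P_i$ generates $(O_i^{(1)},c_i^{(1)}),\dots,(O_i^{(l)},c_i^{(l)})$ and $P_i$ knows $\alpha\in\mathbb{Z}_q$ such that \[ \bigwedge_{k=2}^{l}\left(\left(c_i^{(1)}\prod_{j=2}^{k}(c_i^{(j)})^{-1}=g^{O_i^{(1)}-\sum_{j=2}^{k}O_i^{(j)}}h^{\alpha}\right)\vee\left(c_i^{(k)}=g^{O_i^{(k)}}h^{\alpha}\right)\right), \] then at most one ciphertext among $O_i^{(2)},\dots,O_i^{(l)}$ encodes the same message as $O_i^{(1)}$, while the other ciphertexts among $O_i^{(2)},\dots,O_i^{(l)}$ encode no message.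
   Context: Setting: dining cryptographers protocol with Pedersen commitments. In each round $k$, each pair $P_i,P_j$ shares $K_{ij}^{(k)},r_{ij}^{(k)}\in\mathbb{Z}_q$ with $K_{ji}^{(k)}=-K_{ij}^{(k)}$, $r_{ji}^{(k)}=-r_{ij}^{(k)}$; $K_i^{(k)}=\sum_j K_{ij}^{(k)}$, $r_i^{(k)}=\sum_j r_{ij}^{(k)}$, $c_i^{(k)}=\prod_j g^{K_{ij}^{(k)}}h^{r_{ij}^{(k)}}$. ''Poly-time'' means probabilistic polynomial-time, unable (by the discrete logarithm assumption) to compute $\log_h g$. *)

(* Defs.v *)
From HB Require Import structures.
From mathcomp Require Import all_boot all_order all_algebra all_fingroup.
Set Implicit Arguments. Unset Strict Implicit. Unset Printing Implicit Defensive.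
Import GRing.Theory.
Local Open Scope ring_scope.

(* Message encoded by ciphertext O under key K (both in Z_q):
   O - K, with 0 meaning "no message". *)
Definition msg (q : nat) (O K : 'Z_q) : 'Z_q := O - K.

Definition at_most_one_repeat (q : nat) (l : nat) (O K : nat -> 'Z_q) : Prop :=
  (forall k, (2 <= k <= l)%N -> msg (O k) (K k) = 0 \/ msg (O k) (K k) = msg (O 1%N) (K 1%N))
  /\ (forall k k', (2 <= k <= l)%N -> (2 <= k' <= l)%N ->
        msg (O k) (K k) != 0 -> msg (O k') (K k') != 0 -> k = k').

(* Computational content of the discrete-logarithm assumption: a pair (a, b)
   of exponents with a <> 0 and g^a = h^b; from such a pair, log_h g = b/a is
   obtained (for prime q) by a poly-time computation.  A poly-time party
   cannot produce such a pair from values it knows. *)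
Definition reveals_dlog (gT : finGroupType) (q : nat) (g h : gT) (a b : 'Z_q) : Prop :=
  a != 0 /\ (g ^+ (a : nat) = h ^+ (b : nat))%g.

(* Main.v *)
Require Import Defs.
From HB Require Import structures.
From mathcomp Require Import all_boot all_order all_algebra all_fingroup.
From mathcomp Require Import ring.
From Stdlib Require Import Classical_Prop.
Import GRing.Theory.
Local Open Scope ring_scope.

Lemma PD (gT : finGroupType) (q : nat) (x : gT) (Hq1 : (1<q)%N) (Hx : (x^+q = 1)%g) (a b : 'Z_q) :
  (x^+(((a+b)%R : 'Z_q):nat) = x^+(a:nat) * x^+(b:nat))%g.
Proof.
have M : forall n, (n %% (Zp_trunc q).+2 = n %% q)%N by move=> n; rewrite Zp_cast.
by rewrite -expgD -[RHS](expg_mod _ Hx) /= M.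
Qed.

Lemma P0 (gT : finGroupType) (q : nat) (x : gT) : (x^+((0%R : 'Z_q) : nat) = 1)%g.
Proof. exact: expg0. Qed.

Lemma PN (gT : finGroupType) (q : nat) (x : gT) (Hq1 : (1<q)%N) (Hx : (x^+q = 1)%g) (a : 'Z_q) :
  (x^+(((-a)%R : 'Z_q):nat) = (x^+(a:nat))^-1)%g.
Proof.
apply/eqP; rewrite eq_sym eq_invg_mul -PD // subrr; apply/eqP; exact: P0.
Qed.

Lemma PB (gT : finGroupType) (q : nat) (x : gT) (Hq1 : (1<q)%N) (Hx : (x^+q = 1)%g) (a b : 'Z_q) :
  (x^+(((a-b)%R : 'Z_q):nat) = x^+(a:nat) * (x^+(b:nat))^-1)%g.
Proof. by rewrite PD // PN. Qed.

Lemma Psum (gT : finGroupType) (q : nat) (x : gT) (Hq1 : (1<q)%N) (Hx : (x^+q = 1)%g)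
  (m n : nat) (F : nat -> 'Z_q) :
  (x^+(((\sum_(m <= j < n) F j)%R : 'Z_q):nat) = \prod_(m <= j < n) x^+(F j : nat))%g.
Proof.
apply: (big_morph (fun a : 'Z_q => x^+(a:nat))%g); first exact: PD.
exact: P0.
Qed.

Lemma AC4 (gT : finGroupType) (comm : forall x y : gT, commute x y) (x y z w : gT) :
  (x * y * (z * w) = x * z * (y * w))%g.
Proof. by rewrite -!mulgA; congr (x * _)%g; rewrite mulgA (comm y z) -mulgA. Qed.

Lemma prod_inv (gT : finGroupType) (comm : forall x y : gT, commute x y) (m n : nat)
  (F G : nat -> gT) :
  (\prod_(m <= j < n) (F j * G j)^-1 = (\prod_(m <= j < n) F j)^-1 * (\prod_(m <= j < n) G j)^-1)%g.
Proof.
elim: n => [|n IH]; first by rewrite !big_geq // invg1 mulg1.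
case: (leqP m n) => Hmn; last by rewrite !big_geq // invg1 mulg1.
rewrite !big_nat_recr //= IH !invMg.
set a := ((\prod_(m <= j < n) F j)^-1)%g; set b := ((\prod_(m <= j < n) G j)^-1)%g.
set f := ((F n)^-1)%g; set g := ((G n)^-1)%g.
have -> : (f * a = a * f)%g by apply: comm.
have -> : (g * b = b * g)%g by apply: comm.
rewrite [RHS]AC4 //; congr (_ * _)%g; exact: comm.
Qed.

Lemma L (gT : finGroupType) (comm : forall x y : gT, commute x y) (u v E F : gT) :
  (u * v = E * F)%g -> (u * E^-1 = F * v^-1)%g.
Proof.
move=> H; have -> : u = (E * F * v^-1)%g by rewrite -H mulgK.
by rewrite -(mulgA E) (comm E) mulgK.
Qed.

Lemma comb (q : nat) (l : nat) (m : nat -> 'Z_q)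
  (H : forall k, (2 <= k <= l)%N -> m k = 0 \/ m 1%N = \sum_(2 <= j < k.+1) m j) :
  (forall k k', (2 <= k <= l)%N -> (2 <= k' <= l)%N -> (k < k')%N -> m k != 0 -> m k' != 0 -> False).
Proof.
move=> k k' Hk Hk' Hlt Hmk Hmk'.
have exP : exists n, (k < n <= l)%N && (m n != 0).
  exists k'; rewrite Hlt Hmk' andbT /=; by case/andP: Hk'.
case: (ex_minnP exP) => k1 /andP[/andP[Hk1a Hk1b] Hm1] Hmin.
have Sk : m 1%N = \sum_(2 <= j < k.+1) m j.
  by case: (H k Hk) => // E; rewrite E eqxx in Hmk.
have Sk1 : m 1%N = \sum_(2 <= j < k1.+1) m j.
  case: (H k1) => //; last by move=> E; rewrite E eqxx in Hm1.
  case/andP: Hk => Hk2 _; apply/andP; split => //; exact: leq_trans Hk2 (ltnW Hk1a).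
case/andP: Hk => Hk2 _.
move: Sk1; rewrite big_nat_recr /=; last by apply: leq_trans Hk2 (ltnW Hk1a).
rewrite (big_cat_nat _ (n:=k.+1)) //=; last by apply: leq_trans Hk2 _.
rewrite -Sk (big_nat_cond _ _ k.+1) big1 ?addr0.
  move/eqP; rewrite -subr_eq0 opprD addrA subrr sub0r oppr_eq0 => /eqP E.
  by rewrite E eqxx in Hm1.
move=> j /andP[/andP[Hj1 Hj2] _].
apply/eqP; apply/negPn/negP => Hj.
have : (k1 <= j)%N.
  apply: Hmin; rewrite Hj andbT Hj1 /=; apply: leq_trans Hk1b; exact: ltnW.
by rewrite leqNgt Hj2.
Qed.

Lemma comb2 (q : nat) (l : nat) (m : nat -> 'Z_q)
  (H : forall k, (2 <= k <= l)%N -> m k = 0 \/ m 1%N = \sum_(2 <= j < k.+1) m j) :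
  (forall k, (2 <= k <= l)%N -> m k = 0 \/ m k = m 1%N)
  /\ (forall k k', (2 <= k <= l)%N -> (2 <= k' <= l)%N -> m k != 0 -> m k' != 0 -> k = k').
Proof.
have C := @comb _ _ _ H.
split; last first.
  move=> k k' Hk Hk' H1 H2; case: (ltngtP k k') => // Hlt.
    by case: (C k k').
  by case: (C k' k).
move=> k Hk; case: (eqVneq (m k) 0) => [->|Hmk]; [by left|right].
case: (H k Hk) => [E|->]; first by rewrite E eqxx in Hmk.
case/andP: Hk => Hk2 Hkl.
rewrite big_nat_recr //= (big_nat_cond _ _ 2) big1 ?add0r //.
move=> j /andP[/andP[Hj1 Hj2] _].
apply/eqP; apply/negPn/negP => Hj.
apply: (C j k) => //; apply/andP; split => //; apply: leq_trans Hkl; exact: ltnW.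
Qed.

Theorem theorem3 (gT : finGroupType) (q : nat) (Hq : q = #|gT|) (Hq1 : (1 < q)%N)
  (g h : gT) (Hg : <[g]>%g = [set: gT]) (Hh : <[h]>%g = [set: gT])
  (l : nat) (K r O : nat -> 'Z_q) (c : nat -> gT)
  (Hc : forall k, (1 <= k <= l)%N -> c k = (g ^+ (K k : nat) * h ^+ (r k : nat))%g)
  (alpha : 'Z_q)
  (Hcond : forall k, (2 <= k <= l)%N ->
     (c 1%N * \prod_(2 <= j < k.+1) (c j)^-1
        = g ^+ ((O 1%N - \sum_(2 <= j < k.+1) O j)%R : nat) * h ^+ (alpha : nat))%g
     \/ c k = (g ^+ (O k : nat) * h ^+ (alpha : nat))%g) :
  at_most_one_repeat l O K
  \/ exists k, (2 <= k <= l)%N /\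
       ( reveals_dlog g h ((K 1%N - \sum_(2 <= j < k.+1) K j) - (O 1%N - \sum_(2 <= j < k.+1) O j))
                          (alpha - (r 1%N - \sum_(2 <= j < k.+1) r j))
       \/ reveals_dlog g h (K k - O k) (alpha - r k) ).
Proof.
have ogen : forall x : gT, <[x]>%g = [set: gT] -> (x ^+ q = 1)%g.
  move=> x Hx; have <- : #[x]%g = q by rewrite /order Hx cardsT Hq.
  exact: expg_order.
have gq := ogen g Hg; have hq := ogen h Hh.
have comm : forall x y : gT, commute x y.
  move=> x y.
  have /cycleP[i ->] : x \in <[g]>%g by rewrite Hg inE.
  have /cycleP[j ->] : y \in <[g]>%g by rewrite Hg inE.
  exact: commuteX2.
case: (Classical_Prop.classic (exists k, (2 <= k <= l)%N /\
       ( reveals_dlog g h ((K 1%N - \sum_(2 <= j < k.+1) K j) - (O 1%N - \sum_(2 <= j < k.+1) O j))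
                          (alpha - (r 1%N - \sum_(2 <= j < k.+1) r j))
       \/ reveals_dlog g h (K k - O k) (alpha - r k) ))) => [Hex|Hno]; first by right.
left.
have D : forall k, (2 <= k <= l)%N ->
   (fun j => O j - K j) k = 0 \/
   (fun j => O j - K j) 1%N = \sum_(2 <= j < k.+1) (fun j => O j - K j) j.
  move=> k Hk /=.
  have Hk1 : (1 <= k <= l)%N by case/andP: Hk => H1 H2; rewrite H2 andbT; exact: ltnW.
  case: (Hcond k Hk) => [HA|HB].
  - right.
    set X := (K 1%N - \sum_(2 <= j < k.+1) K j) - (O 1%N - \sum_(2 <= j < k.+1) O j).
    have EX : (g ^+ (X : nat) = h ^+ ((alpha - (r 1%N - \sum_(2 <= j < k.+1) r j))%R : nat))%g.
      rewrite /X. rewrite [LHS]PB //. rewrite (PB _ _ h Hq1 hq).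
      apply: L => //.
      rewrite -HA Hc //; last by apply/andP; split => //; case/andP: Hk => H2 Hl; exact: leq_trans (ltnW H2) Hl.
      rewrite (PB _ _ g Hq1 gq (K 1%N) (\sum_(2 <= j < k.+1) K j)).
      rewrite (PB _ _ h Hq1 hq (r 1%N) (\sum_(2 <= j < k.+1) r j)).
      rewrite (Psum _ _ g Hq1 gq) (Psum _ _ h Hq1 hq).
      rewrite (@eq_big_nat _ _ _ 2 k.+1 (fun j => (c j)^-1)%g (fun j => (g ^+ (K j : nat) * h ^+ (r j : nat))^-1)%g); last first.
        move=> i /andP[Hi1 Hi2]; rewrite Hc //; apply/andP; split.
          exact: leq_trans Hi1.
        by case/andP: Hk => _ Hkl; apply: leq_trans Hkl.
      rewrite prod_inv //.
      by rewrite AC4.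
    have X0 : X = 0.
      apply/eqP; apply/negPn/negP => HX; apply: Hno; exists k; split => //.
      by left; split.
    move: X0; rewrite /X => /eqP; rewrite subr_eq0 => /eqP E.
    rewrite sumrB; apply/eqP; rewrite -subr_eq0; apply/eqP.
    transitivity (- ((K 1%N - \sum_(2 <= j < k.+1) K j) - (O 1%N - \sum_(2 <= j < k.+1) O j))); first by ring.
    by rewrite E subrr oppr0.
  - left.
    have EX : (g ^+ ((K k - O k)%R : nat) = h ^+ ((alpha - r k)%R : nat))%g.
      rewrite !PB //; apply: L => //; by rewrite -HB Hc.
    have X0 : K k - O k = 0.
      apply/eqP; apply/negPn/negP => HX; apply: Hno; exists k; split => //.
      by right; split.
    by apply/eqP; rewrite -opprB oppr_eq0 X0.
have [P1 P2] := @comb2 _ _ _ D.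
by split.
Qed.
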